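(* For general parameters $a_j,b_j,c_j$, consider the following four elements of $G_1$, each of which has isolated fixed points on $T$: $k_{10}=[-1,1,1,-1,1,-1,1]$, $k_{11}=[-1,1,1,1,-1,1,-1]$, $k_{12}=[1,1,-1,-1,1,1,-1]$, $k_{13}=[1,1,-1,1,-1,-1,1]$. Then each of $k_{11},k_{12},k_{13}$ has fixed points lying on the base locus of the pencil $\{\hat X_\lambda\}_{\lambda}$ (i.e. on $\bigcap_\lambda\hat X_\lambda$), whereas no fixed point of $k_{10}$ lies on this base locus.
   Context: Setup (quadric model). Let $a_1,a_2,a_3,b_1,b_2,b_3,c_1,c_2,c_3\in\mathbb C$ be general, so that the following three curves are smooth elliptic curves: $E_1=\{(x_0:x_1:x_2:x_3)\in\mathbb P^3: x_1^2+x_2^2+x_3^2=0,\ x_0^2=a_1x_1^2+a_2x_2^2+a_3x_3^2\}$, $E_2=\{(u_0:u_1:u_2:u_3)\in\mathbb P^3: u_1^2+u_2^2+u_3^2=0,\ u_0^2=b_1u_1^2+b_2u_2^2+b_3u_3^2\}$, $E_3=\{(z_0:z_1:z_2:z_3)\in\mathbb P^3: z_1^2+z_2^2+z_3^2=0,\ z_0^2=c_1z_1^2+c_2z_2^2+c_3z_3^2\}$. Let $T=E_1\times E_2\times E_3$, $\pi':T\to P_1:=C_1\times C_2\times C_3$ forgetting $x_0,u_0,z_0$ ($C_j\subset\mathbb P^2$ the conics $x_1^2+x_2^2+x_3^2=0$ etc.), with $C_j\cong\mathbb P^1$ via $(s_1:t_1)=(x_1+ix_2:x_3)=(-x_3:x_1-ix_2)$,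 $(s_2:t_2)=(u_1+iu_2:u_3)=(-u_3:u_1-iu_2)$, $(s_3:t_3)=(z_1+iz_2:z_3)=(-z_3:z_1-iz_2)$. For $\lambda\in\mathbb C$, $Y_\lambda=\{s_1s_2s_3=\lambda t_1t_2t_3\}\subset P_1$ and $\hat X_\lambda=\pi'^{-1}(Y_\lambda)$, a pencil of surfaces in $T$. For $\epsilon_0,\eta_1,\epsilon_1,\eta_0,\epsilon_2,\zeta_0,\epsilon_3\in\{\pm1\}$ with $\epsilon_1\epsilon_2\epsilon_3=1$, $[\epsilon_0,\eta_1,\epsilon_1,\eta_0,\epsilon_2,\zeta_0,\epsilon_3]$ denotes the automorphism of $T$: $(x_0:x_1:x_2:x_3)\mapsto(\epsilon_0x_0:\eta_1x_1:x_2:\epsilon_1x_3)$, $(u_0:u_1:u_2:u_3)\mapsto(\eta_0u_0:\eta_1u_1:u_2:\epsilon_2u_3)$, $(z_0:z_1:z_2:z_3)\mapsto(\zeta_0z_0:\eta_1z_1:z_2:\epsilon_3z_3)$; $G_1$ is the group of those with $\eta_1=1$. *)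

(* Defs.v *)
(* complex numbers modelled by algC (algebraically closed, with 'i). *)
From HB Require Import structures.
From mathcomp Require Import all_boot all_order all_algebra all_field.
Set Implicit Arguments. Unset Strict Implicit. Unset Printing Implicit Defensive.
Import Order.TTheory GRing.Theory Num.Theory.
Local Open Scope ring_scope.

Record P3v := mkP3 { c0 : algC; c1 : algC; c2 : algC; c3 : algC }.

Definition nonzeroP3 (v : P3v) : Prop :=
  ~ (c0 v = 0 /\ c1 v = 0 /\ c2 v = 0 /\ c3 v = 0).

Definition projEq (v w : P3v) : Prop :=
  exists mu : algC, mu != 0 /\
    c0 w = mu * c0 v /\ c1 w = mu * c1 v /\ c2 w = mu * c2 v /\ c3 w = mu * c3 v.

Definition onE (a1 a2 a3 : algC) (v : P3v) : Prop :=
  nonzeroP3 v /\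
  c1 v ^+ 2 + c2 v ^+ 2 + c3 v ^+ 2 = 0 /\
  c0 v ^+ 2 = a1 * c1 v ^+ 2 + a2 * c2 v ^+ 2 + a3 * c3 v ^+ 2.

(* A point of T = E1 x E2 x E3 (given by representatives). *)
Definition ptT := (P3v * P3v * P3v)%type.

Definition onT (a1 a2 a3 b1 b2 b3 c1' c2' c3' : algC) (p : ptT) : Prop :=
  onE a1 a2 a3 p.1.1 /\ onE b1 b2 b3 p.1.2 /\ onE c1' c2' c3' p.2.

Definition actE (e0 h1 e1 : algC) (v : P3v) : P3v :=
  mkP3 (e0 * c0 v) (h1 * c1 v) (c2 v) (e1 * c3 v).

(* the automorphism [eps0,eta1,eps1,eta0,eps2,zeta0,eps3] of T *)
Definition autT (eps0 eta1 eps1 eta0 eps2 zeta0 eps3 : algC) (p : ptT) : ptT :=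
  (actE eps0 eta1 eps1 p.1.1, actE eta0 eta1 eps2 p.1.2, actE zeta0 eta1 eps3 p.2).

Definition fixedPt (g : ptT -> ptT) (p : ptT) : Prop :=
  projEq p.1.1 (g p).1.1 /\ projEq p.1.2 (g p).1.2 /\ projEq p.2 (g p).2.

(* (s,t) is a representative of the point (s:t) in P^1 which is the image of
   the conic point v under the isomorphism C ~ P^1,
   (s:t) = (w1 + i w2 : w3) = (-w3 : w1 - i w2). *)
Definition isST (v : P3v) (s t : algC) : Prop :=
  ~ (s = 0 /\ t = 0) /\
  s * c3 v = t * (c1 v + 'i * c2 v) /\
  s * (c1 v - 'i * c2 v) = - t * c3 v.

(* p lies on hat X_lambda = pi'^{-1}(Y_lambda), Y_lambda = {s1 s2 s3 = lambda t1 t2 t3} *)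
Definition inXhat (lambda : algC) (p : ptT) : Prop :=
  exists s1 t1 s2 t2 s3 t3 : algC,
    isST p.1.1 s1 t1 /\ isST p.1.2 s2 t2 /\ isST p.2 s3 t3 /\
    s1 * s2 * s3 = lambda * (t1 * t2 * t3).

Definition baseLocus (p : ptT) : Prop := forall lambda : algC, inXhat lambda p.

Definition k10 := autT (-1) 1 1 (-1) 1 (-1) 1.
Definition k11 := autT (-1) 1 1 1 (-1) 1 (-1).
Definition k12 := autT 1 1 (-1) (-1) 1 1 (-1).
Definition k13 := autT 1 1 (-1) 1 (-1) (-1) 1.

Definition distinct3 (x y z : algC) : Prop := x != y /\ y != z /\ x != z.

(* Main.v *)
Require Import Defs.
From HB Require Import structures.
From mathcomp Require Import all_boot all_order all_algebra all_field.
From mathcomp Require Import ring.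
Import Order.TTheory GRing.Theory Num.Theory.
Local Open Scope ring_scope.
Set Implicit Arguments.

Lemma iprod (x y : algC) : (x - 'i * y) * (x + 'i * y) = x ^+ 2 + y ^+ 2.
Proof.
have -> : (x - 'i * y) * (x + 'i * y) = x ^+ 2 - 'i ^+ 2 * y ^+ 2 by ring.
by rewrite sqrCi mulN1r opprK.
Qed.

Lemma sqrt0 (z : algC) : sqrtC z = 0 -> z = 0.
Proof. by move=> h; rewrite -(sqrtCK z) h expr0n. Qed.

Lemma isST_ex (v : P3v) :
  c1 v ^+ 2 + c2 v ^+ 2 + c3 v ^+ 2 = 0 ->
  ~ (c1 v = 0 /\ c2 v = 0 /\ c3 v = 0) -> exists s t, isST v s t.
Proof.
move=> Hc Hnz.
have Hc' : c1 v ^+ 2 + c2 v ^+ 2 = - c3 v ^+ 2.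
  by apply/eqP; rewrite -subr_eq0 opprK; apply/eqP.
case: (boolP ((c1 v - 'i * c2 v == 0) && (c3 v == 0))).
- case/andP=> /eqP h1 /eqP h3.
  have e1 : c1 v = 'i * c2 v by apply/eqP; rewrite -subr_eq0; apply/eqP.
  exists (c1 v + 'i * c2 v), 0; split; last split.
  + move=> [hs _]; apply: Hnz.
    have : 'i * c2 v *+ 2 = 0 by rewrite mulr2n -{1}e1 hs.
    move/eqP; rewrite mulrn_eq0 /= mulf_eq0 (negbTE (neq0Ci _)) /= => /eqP h2.
    by rewrite e1 h2 mulr0 h3.
  + by rewrite h3; ring.
  + by rewrite h1 h3; ring.
- move=> hn; exists (- c3 v), (c1 v - 'i * c2 v); split; last split.
  + move=> [hs ht]; move: hn; rewrite ht eqxx /=.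
    by move/eqP: hs; rewrite oppr_eq0 => ->.
  + rewrite mulrC iprod Hc'; ring.
  + ring.
Qed.

Lemma fixed_c0 (a1 a2 a3 : algC) (v : P3v) :
  onE a1 a2 a3 v -> projEq v (actE (-1) 1 1 v) -> c0 v = 0.
Proof.
move=> [Hnz [Hc He]] [mu [hmu [h0 [h1 [h2 h3]]]]]; move: h0 h1 h2 h3 => /= h0 h1 h2 h3.
case: (eqVneq mu 1) => [hm|hm].
- move: h0; rewrite hm mul1r mulN1r => /eqP; rewrite eq_sym -subr_eq0 opprK -mulr2n.
  by rewrite mulrn_eq0 /= => /eqP.
- have z : forall x : algC, 1 * x = mu * x -> x = 0.
    move=> x /eqP; rewrite -subr_eq0 -mulrBl mulf_eq0 subr_eq0 eq_sym (negbTE hm) /=.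
    by move/eqP.
  have [[z1 z2] z3] := (z _ h1, z _ (etrans (mul1r _) h2), z _ h3).
  move: He; rewrite z1 z2 z3 expr0n /= !mulr0 !addr0 => /eqP.
  by rewrite expf_eq0 /= => /eqP.
Qed.

Lemma noS (a1 a2 a3 : algC) (v : P3v) t :
  onE a1 a2 a3 v -> a1 != a2 -> c0 v = 0 -> isST v 0 t -> False.
Proof.
move=> [Hnz [Hc He]] ha h0 [hst [e1 e2]].
have ht : t != 0 by apply/eqP => ht; apply: hst.
move: e1; rewrite mul0r => /esym /eqP; rewrite mulf_eq0 (negbTE ht) /= => /eqP e1.
move: e2; rewrite mul0r mulNr => /esym /eqP; rewrite oppr_eq0 mulf_eq0 (negbTE ht) /= => /eqP e3.
have c1e : c1 v = - ('i * c2 v) by apply/eqP; rewrite -addr_eq0; apply/eqP.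
move: He; rewrite h0 e3 c1e.
have -> : a1 * (- ('i * c2 v)) ^+ 2 + a2 * c2 v ^+ 2 + a3 * 0 ^+ 2
   = (a2 - a1 + a1 * ('i ^+ 2 + 1)) * c2 v ^+ 2 by ring.
rewrite sqrCi addNr mulr0 addr0 expr0n /= => /esym /eqP.
rewrite mulf_eq0 subr_eq0 eq_sym (negbTE ha) /= expf_eq0 /= => /eqP z2.
apply: Hnz; rewrite c1e z2 e3 h0 mulr0 oppr0; done.
Qed.

Definition sPt (a1 a2 : algC) := mkP3 (sqrtC (a2 - a1)) (- 'i) 1 0.
Definition tPt (a1 a2 : algC) := mkP3 (sqrtC (a2 - a1)) 'i 1 0.
Definition zPt (a1 a2 a3 : algC) :=
  mkP3 0 (sqrtC (a2 - a3)) (sqrtC (a3 - a1)) (sqrtC (a1 - a2)).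

Lemma onE_s a1 a2 a3 : onE a1 a2 a3 (sPt a1 a2).
Proof.
split; [|split] => /=.
- by move=> [_ [_ [h _]]]; move/eqP: h; rewrite oner_eq0.
- rewrite sqrrN sqrCi; ring.
- rewrite sqrtCK sqrrN sqrCi; ring.
Qed.

Lemma onE_t a1 a2 a3 : onE a1 a2 a3 (tPt a1 a2).
Proof.
split; [|split] => /=.
- by move=> [_ [_ [h _]]]; move/eqP: h; rewrite oner_eq0.
- rewrite sqrCi; ring.
- rewrite sqrtCK sqrCi; ring.
Qed.

Lemma onE_z a1 a2 a3 : distinct3 a1 a2 a3 -> onE a1 a2 a3 (zPt a1 a2 a3).
Proof.
move=> [h12 [h23 h13]].
split; [|split] => /=.
- move=> [_ [h1 _]]; move: h23 => /eqP; apply.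
  by apply/eqP; rewrite -subr_eq0; apply/eqP; apply: sqrt0.
- rewrite !sqrtCK; ring.
- rewrite !sqrtCK; ring.
Qed.

Lemma ST_s a1 a2 : isST (sPt a1 a2) 0 1.
Proof. split; [by move=> [_ /eqP]; rewrite oner_eq0|split=> /=; ring]. Qed.

Lemma ST_t a1 a2 : isST (tPt a1 a2) 1 0.
Proof. split; [by move=> [/eqP]; rewrite oner_eq0|split=> /=; ring]. Qed.

Lemma ST_z a1 a2 a3 : distinct3 a1 a2 a3 -> exists s t, isST (zPt a1 a2 a3) s t.
Proof.
move=> hd; have [Hnz [Hc _]] := onE_z hd.
apply: isST_ex => //; move=> [h1 [h2 h3]]; apply: Hnz; done.
Qed.

Lemma projEq_same (v w : P3v) :
  c0 w = c0 v -> c1 w = c1 v -> c2 w = c2 v -> c3 w = c3 v -> projEq v w.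
Proof.
move=> h0 h1 h2 h3; exists 1; rewrite oner_eq0 !mul1r; do !split => //.
Qed.

Theorem mainTheorem6 (a1 a2 a3 b1 b2 b3 c1 c2 c3 : algC) :
  distinct3 a1 a2 a3 -> distinct3 b1 b2 b3 -> distinct3 c1 c2 c3 ->
  (exists p, onT a1 a2 a3 b1 b2 b3 c1 c2 c3 p /\ fixedPt k11 p /\ baseLocus p) /\
  (exists p, onT a1 a2 a3 b1 b2 b3 c1 c2 c3 p /\ fixedPt k12 p /\ baseLocus p) /\
  (exists p, onT a1 a2 a3 b1 b2 b3 c1 c2 c3 p /\ fixedPt k13 p /\ baseLocus p) /\
  ~ (exists p, onT a1 a2 a3 b1 b2 b3 c1 c2 c3 p /\ fixedPt k10 p /\ baseLocus p).
Proof.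
move=> ha hb hc; split; [|split; [|split]].
- exists (zPt a1 a2 a3, sPt b1 b2, tPt c1 c2).
  split; first by split; [exact: onE_z|split; [exact: onE_s|exact: onE_t]].
  split; first by split; [|split]; apply: projEq_same => /=; ring.
  move=> l; have [s [t hst]] := ST_z ha.
  exists s, t, 0, 1, 1, 0; split; [exact: hst|split; [exact: ST_s|split; [exact: ST_t|ring]]].
- exists (sPt a1 a2, zPt b1 b2 b3, tPt c1 c2).
  split; first by split; [exact: onE_s|split; [exact: onE_z|exact: onE_t]].
  split; first by split; [|split]; apply: projEq_same => /=; ring.
  move=> l; have [s [t hst]] := ST_z hb.
  exists 0, 1, s, t, 1, 0; split; [exact: ST_s|split; [exact: hst|split; [exact: ST_t|ring]]].
- exists (sPt a1 a2, tPt b1 b2, zPt c1 c2 c3).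
  split; first by split; [exact: onE_s|split; [exact: onE_t|exact: onE_z]].
  split; first by split; [|split]; apply: projEq_same => /=; ring.
  move=> l; have [s [t hst]] := ST_z hc.
  exists 0, 1, 1, 0, s, t; split; [exact: ST_s|split; [exact: ST_t|split; [exact: hst|ring]]].
- case=> [[[x u] z] [[hx [hu hz]] [[fx [fu fz]] hB]]].
  have [s1 [t1 [s2 [t2 [s3 [t3 [sx [su [sz e]]]]]]]]] := hB 0.
  move: e; rewrite mul0r => /eqP; rewrite !mulf_eq0 -orbA.
  have x0 := fixed_c0 hx fx; have u0 := fixed_c0 hu fu; have z0 := fixed_c0 hz fz.
  case/or3P => /eqP h.
  + by move: sx; rewrite h; apply: noS hx _ x0; case: ha.
  + by move: su; rewrite h; apply: noS hu _ u0; case: hb.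
  + by move: sz; rewrite h; apply: noS hz _ z0; case: hc.
Qed.
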